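(* Let $l\ge1$, $n\in\mathbb N$ and $\Delta t>0$ with $\Delta t\,c_n<2$. Then for every initial condition $\rho_0\in B(\mathcal H_n)$ there exists $\rho_\infty\in B(\mathcal H_n)$ with $P_{\{l\}}\rho_\infty P_{\{l\}}=\rho_\infty$ such that $(\mathcal E_1^{\Delta t,n})^p(\rho_0)\to\rho_\infty$ as $p\to\infty$ at a geometric rate, where $P_{\{l\}}$ is the orthogonal projector onto $\mathrm{span}\{|k\rangle:0\le k\le l-1\}$.
   Context: Work in $\mathcal H=\ell^2(\mathbb N)$ with Fock basis $(|k\rangle)_{k\in\mathbb N}$ and annihilation operator $a|k+1\rangle=\sqrt{k+1}|k\rangle$, $a|0\rangle=0$. Fix $l\ge1$. For $n\in\mathbb N$, $\mathcal H_n=\mathrm{span}\{|k\rangle:0\le k\le n\}$ with orthogonal projector $P_n$, and $a^l_n=P_na^lP_n$. Set $c_k=\prod_{j=0}^{l-1}(k-j)$, so that $a^{l\dagger}_na^l_n|k\rangle=c_k|k\rangle$ for $0\le k\le n$. The first-order explicit Euler scheme for the Galerkin-truncated $l$-photon loss equation is $\mathcal E_1^{\Delta t,n}(\rho)=\rho+\Delta t\big(a^l_n\rho a^{l\dagger}_n-\tfrac12(a^{l\dagger}_na^l_n\rho+\rho a^{l\dagger}_na^l_n)\big)$ for $\rho\in B(\mathcal H_n)$. *)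

(* Defs.v *)
From HB Require Import structures.
From mathcomp Require Import all_boot all_order all_algebra.
From mathcomp Require Import complex.
From mathcomp Require Import reals.
Set Implicit Arguments. Unset Strict Implicit. Unset Printing Implicit Defensive.
Import Order.TTheory GRing.Theory Num.Theory.
Local Open Scope ring_scope.
Local Open Scope complex_scope.

(* c_k = prod_{j=0}^{l-1} (k - j).  With truncated nat subtraction this equals
   the integer product, since for k < l the factor j = k vanishes. *)
Definition cfac (l k : nat) : nat := (\prod_(j < l) (k - j))%N.

(* Matrix of a^l_n = P_n a^l P_n on H_n = span{|0>,...,|n>} (index i <-> |i>):
   a^l |j> = sqrt(c_j) |j - l> for j >= l and 0 otherwise, so
   <i| a^l_n |j> = sqrt(c_j) if i + l = j, and 0 otherwise. *)
Definition al_n (R : realType) (l n : nat) : 'M[R[i]]_n.+1 :=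
  \matrix_(i < n.+1, j < n.+1)
    (if (i + l == j)%N then (Num.sqrt ((cfac l j)%:R : R))%:C else 0).

Definition adjmx (R : realType) (m : nat) (A : 'M[R[i]]_m) : 'M[R[i]]_m :=
  map_mx (@conjc R) A^T.

Definition euler1 (R : realType) (l n : nat) (dt : R) (rho : 'M[R[i]]_n.+1)
  : 'M[R[i]]_n.+1 :=
  let A := al_n R l n in
  let AdA := adjmx A *m A in
  rho + dt%:C *: (A *m rho *m adjmx A
                  - (2%:R)^-1 *: (AdA *m rho + rho *m AdA)).

Definition Pl (R : realType) (l n : nat) : 'M[R[i]]_n.+1 :=
  \matrix_(i < n.+1, j < n.+1) (if (i == j) && (i < l)%N then 1 else 0).

(* Main.v *)
Require Import Defs.
From HB Require Import structures.
From mathcomp Require Import all_boot all_order all_algebra.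
From mathcomp Require Import complex.
From mathcomp Require Import reals.
From mathcomp Require Import classical_sets.
From mathcomp Require Import ring lra zify.
From Stdlib Require Import Lia.
Import Order.TTheory GRing.Theory Num.Theory.
Local Open Scope ring_scope.
Local Open Scope complex_scope.
Section Conv.
Variable R : realType.

Lemma mono_up (b : nat -> R) : (forall p, b p <= b p.+1) -> forall m k, b m <= b (m + k)%N.
Proof. move=> H m; elim=> [|k IH]; first by rewrite addn0.
by apply: (le_trans IH); rewrite addnS.
Qed.

Lemma real_geom_lim (a : nat -> R) (K q : R) : 0 <= K -> 0 <= q -> q < 1 ->
  (forall p, `|a p.+1 - a p| <= K * q ^+ p) ->
  exists L, forall p, `|a p - L| <= K / (1 - q) * q ^+ p.
Proof.
move=> K0 q0 q1 H.
set M := K / (1 - q).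
have hM : M * (1 - q) = K by rewrite /M mulfVK // subr_eq0 gt_eqF.
have M0 : 0 <= M by rewrite /M divr_ge0 // subr_ge0 ltW.
pose b p := a p - M * q ^+ p.
pose c p := a p + M * q ^+ p.
have bup : forall p, b p <= b p.+1.
  move=> p; rewrite /b; have := H p; rewrite ler_norml => /andP[h1 h2].
  have e : M * q ^+ p.+1 = M * q ^+ p - K * q ^+ p.
    by rewrite -hM exprS; ring.
  rewrite e; lra.
have cdn : forall p, - c p.+1 >= - c p.
  move=> p; rewrite /c; have := H p; rewrite ler_norml => /andP[h1 h2].
  have e : M * q ^+ p.+1 = M * q ^+ p - K * q ^+ p.
    by rewrite -hM exprS; ring.
  rewrite e; lra.
have bc : forall m p, b m <= c p.
  move=> m p.
  have Bm := @mono_up b bup m p.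
  have Cp := @mono_up (fun p => - c p) cdn p m.
  have : b (m + p)%N <= c (m + p)%N.
    rewrite /b /c; have : 0 <= M * q ^+ (m + p) by rewrite mulr_ge0 // exprn_ge0.
    lra.
  rewrite addnC in Cp; lra.
pose E := fun r : R => exists p, r = b p.
have Eub : forall p, ubound E (c p) by move=> p r [m ->]; exact: bc.
have Ene : nonempty E by exists (b 0%N), 0%N.
exists (sup E) => p.
have h1 : b p <= sup E by apply: (ub_le_sup (ex_intro _ (c 0%N) (Eub 0%N))); exists p.
have h2 : sup E <= c p by apply: ge_sup.
rewrite ler_norml; rewrite /b /c in h1 h2; apply/andP; split; lra.
Qed.
Local Notation nc := (@Normc.normc R).

Lemma nc_ReIm (a b : R) : nc (a +i* b) <= `|a| + `|b|.
Proof.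
rewrite /=. 
rewrite -[X in _ <= X]ger0_norm ?addr_ge0 // -sqrtr_sqr ler_sqrt ?sqr_ge0 //.
rewrite -[a ^+ 2]real_normK ?num_real // -[b ^+ 2]real_normK ?num_real //.
have : 0 <= `|a| * `|b| by rewrite mulr_ge0.
move: `|a| `|b| => u v h.
rewrite sqrrD; rewrite -mulr_natr; lra.
Qed.
Lemma Re_le_nc (z : R[i]) : (`|complex.Re z| : R) <= (nc z : R).
Proof. case: z => a b /=. rewrite -sqrtr_sqr ler_sqrt ?addr_ge0 ?sqr_ge0 //.
by rewrite lerDl sqr_ge0. Qed.
Lemma Im_le_nc (z : R[i]) : (`|complex.Im z| : R) <= (nc z : R).
Proof. case: z => a b /=. rewrite -sqrtr_sqr ler_sqrt ?addr_ge0 ?sqr_ge0 //.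
by rewrite lerDr sqr_ge0. Qed.
Lemma ReB (u v : R[i]) : complex.Re (u - v) = complex.Re u - complex.Re v.
Proof. by case: u; case: v. Qed.
Lemma ImB (u v : R[i]) : complex.Im (u - v) = complex.Im u - complex.Im v.
Proof. by case: u; case: v. Qed.
Lemma cplx_geom_lim (x : nat -> R[i]) (K q : R) : 0 <= K -> 0 <= q -> q < 1 ->
  (forall p, nc (x p.+1 - x p) <= K * q ^+ p) ->
  exists L, forall p, nc (x p - L) <= 2 * (K / (1 - q)) * q ^+ p.
Proof.
move=> K0 q0 q1 H.
have [La HLa] := @real_geom_lim (fun p => complex.Re (x p)) K q K0 q0 q1
  (fun p => ltac:(rewrite -ReB; exact: le_trans (Re_le_nc (x p.+1 - x p)) (H p))).
have [Lb HLb] := @real_geom_lim (fun p => complex.Im (x p)) K q K0 q0 q1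
  (fun p => ltac:(rewrite -ImB; exact: le_trans (Im_le_nc (x p.+1 - x p)) (H p))).
exists (La +i* Lb) => p.
have -> : x p - La +i* Lb = (complex.Re (x p) - La) +i* (complex.Im (x p) - Lb) by case: (x p).
apply: (le_trans (nc_ReIm _ _)).
move: (HLa p) (HLb p).
rewrite -mulrA.
move: (K / (1 - q) * q ^+ p) => M. move: (`|_ - La|) (`|_ - Lb|) => u v.
lra.
Qed.
Lemma nc_real (x : R) : nc x%:C = `|x|.
Proof. by rewrite /= expr0n addr0 sqrtr_sqr. Qed.
Lemma nc_ge0 (z : R[i]) : 0 <= nc z.
Proof. by case: z => a b /=; rewrite sqrtr_ge0. Qed.

Lemma trans_decay (x : nat -> R[i]) (q0 q D : R) : 0 <= q0 -> q0 < q -> 0 <= D ->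
  (forall p, nc (x p.+1) <= q0 * nc (x p) + D * q ^+ p) ->
  forall p, nc (x p) <= (nc (x 0%N) + D / (q - q0)) * q ^+ p.
Proof.
move=> q00 qq D0 H.
have qd : 0 < q - q0 by rewrite subr_gt0.
have hC : (nc (x 0%N) + D / (q - q0)) * (q - q0) = nc (x 0%N) * (q - q0) + D.
  by rewrite mulrDl mulfVK // gt_eqF.
have h0 := nc_ge0 (x 0%N).
have Cge : nc (x 0%N) <= nc (x 0%N) + D / (q - q0) by rewrite lerDl divr_ge0 // ltW.
move: (nc (x 0%N) + D / (q - q0)) hC Cge => C hC Cge.
have C0 : 0 <= C.
  have : 0 <= C * (q - q0) by rewrite hC addr_ge0 // mulr_ge0 // ltW.
  by rewrite pmulr_lge0.
have key : q0 * C + D <= C * q.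
  have : 0 <= nc (x 0%N) * (q - q0) by rewrite mulr_ge0 // ltW.
  move: hC; rewrite mulrBr => hC; lra.
elim=> [|p IH].
  by rewrite expr0 mulr1.
apply: (le_trans (H p)).
have qp : 0 <= q ^+ p by rewrite exprn_ge0 // (le_trans q00) // ltW.
have : q0 * nc (x p) <= q0 * (C * q ^+ p) by rewrite ler_wpM2l.
have : (q0 * C + D) * q ^+ p <= (C * q) * q ^+ p by rewrite ler_wpM2r.
rewrite exprS; move: (nc (x p)) => u. 
have -> : C * (q * q ^+ p) = C * q * q ^+ p by ring.
have -> : q0 * (C * q ^+ p) = q0 * C * q ^+ p by ring.
rewrite mulrDl; lra.
Qed.
End Conv.
Lemma cfac_lt l k : (k < l)%N -> cfac l k = 0%N.
Proof. by move=> h; rewrite /cfac (bigD1 (Ordinal h)) //= subnn. Qed.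
Lemma cfac_ge l k : (l <= k)%N -> (0 < cfac l k)%N.
Proof. move=> h; rewrite /cfac prodn_gt0 // => j; rewrite subn_gt0; exact: leq_trans (ltn_ord j) h. Qed.
Lemma cfac_mono l k m : (k <= m)%N -> (cfac l k <= cfac l m)%N.
Proof. move=> h; rewrite /cfac; apply: leq_prod => j _; exact: leq_sub2r. Qed.

Section Mx.
Variable R : realType.

Lemma sum_delta (n x : nat) (F : 'I_n.+1 -> R[i]) :
  \sum_(k < n.+1) (if (x == k)%N then F k else 0) = if (x < n.+1)%N then F (inord x) else 0.
Proof.
case: ifP => hx.
  rewrite (bigD1 (inord x)) //= inordK // eqxx big1 ?addr0 // => k hk.
  case: eqP => // e; move: hk; rewrite e.
  by move/eqP; case; apply/val_inj; rewrite /= inordK // -e.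
apply: big1 => k _; case: eqP => // e.
by move: hx; rewrite e ltn_ord.
Qed.

Lemma sum_delta_shift (n l k : nat) (F : 'I_n.+1 -> R[i]) :
  \sum_(t < n.+1) (if (t + l == k)%N then F t else 0) =
  if (l <= k)%N && (k - l < n.+1)%N then F (inord (k - l)) else 0.
Proof.
case: ifP => h.
  case/andP: h => h1 h2.
  rewrite (bigD1 (inord (k - l))) //= inordK // subnK // eqxx big1 ?addr0 // => t ht.
  case: eqP => // e; move: ht; suff -> : t = inord (k - l) by rewrite eqxx.
  by apply/val_inj; rewrite /= inordK // -e addnK.
apply: big1 => t _; case: eqP => // e.
by move: h; rewrite -e addnK leq_addl ltn_ord.
Qed.
Lemma mul_if_l (b : bool) (x y : R[i]) : (if b then x else 0) * y = if b then x * y else 0.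
Proof. by case: b; rewrite ?mul0r. Qed.
Lemma mul_if_r (b : bool) (x y : R[i]) : y * (if b then x else 0) = if b then y * x else 0.
Proof. by case: b; rewrite ?mulr0. Qed.

Variables (l n : nat).
Local Notation A := (al_n R l n).
Local Notation s k := (Num.sqrt ((cfac l k)%:R : R)).

Lemma Aentry (i k : 'I_n.+1) : A i k = if (i + l == k)%N then (s k)%:C else 0.
Proof. by rewrite mxE. Qed.

Lemma adjentry (k t : 'I_n.+1) : adjmx A k t = if (t + l == k)%N then (s k)%:C else 0.
Proof. rewrite /adjmx !mxE; case: eqP => _; [exact: conjc_real | exact: conjc0]. Qed.

Lemma Arho (rho : 'M[R[i]]_n.+1) i m :
  (A *m rho) i m = if (i + l < n.+1)%N then (s (i + l))%:C * rho (inord (i + l)) m else 0.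
Proof.
rewrite mxE. under eq_bigr => k _ do rewrite Aentry mul_if_l.
rewrite sum_delta; case: ifP => // h; by rewrite inordK.
Qed.

Lemma rhoAdj (rho : 'M[R[i]]_n.+1) i j :
  (rho *m adjmx A) i j = if (j + l < n.+1)%N then rho i (inord (j + l)) * (s (j + l))%:C else 0.
Proof.
rewrite mxE. under eq_bigr => k _ do rewrite adjentry mul_if_r.
rewrite sum_delta; case: ifP => // h; by rewrite inordK.
Qed.

Lemma ArhoA (rho : 'M[R[i]]_n.+1) i j :
  (A *m rho *m adjmx A) i j = if (i + l < n.+1)%N && (j + l < n.+1)%N then
     (s (i + l) * s (j + l))%:C * rho (inord (i + l)) (inord (j + l)) else 0.
Proof.
rewrite rhoAdj Arho; case hi: (i + l < n.+1)%N; case hj: (j + l < n.+1)%N;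
  rewrite /= ?mul0r //.
by rewrite rmorphM /= mulrAC.
Qed.

Lemma conj_if (b : bool) (x : R) : (if b then x%:C else 0)^* = if b then x%:C else 0.
Proof. by case: b; [exact: conjc_real | exact: conjc0]. Qed.

Lemma AdA : adjmx A *m A = diag_mx (\row_k ((cfac l k)%:R : R)%:C).
Proof.
apply/matrixP => k m; rewrite !mxE.
under eq_bigr => t _ do rewrite /adjmx !mxE conj_if mul_if_l.
rewrite sum_delta_shift.
have kn : (k - l < n.+1)%N by apply: leq_ltn_trans (leq_subr _ _) (ltn_ord k).
rewrite kn andbT; case: leqP => hk.
  rewrite inordK // subnK //.
  have -> : ((k : nat) == m) = (k == m) by [].
  case: eqP => [->|_]; last by rewrite mulr0.
  by rewrite -rmorphM /= -expr2 sqr_sqrtr.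
by rewrite cfac_lt // mul0rn.
Qed.
Local Notation c k := ((cfac l k)%:R : R).

Lemma euler_entry (dt : R) (rho : 'M[R[i]]_n.+1) i j :
  euler1 l dt rho i j = (1 - dt * (c i + c j) / 2)%:C * rho i j +
   (if (i + l < n.+1)%N && (j + l < n.+1)%N then
     (dt * (s (i + l) * s (j + l)))%:C * rho (inord (i + l)) (inord (j + l)) else 0).
Proof.
rewrite /euler1 /= AdA mul_diag_mx mul_mx_diag !mxE.
have := ArhoA rho i j; rewrite mxE => ->.
case: ifP => _; rewrite ?mulr0 ?addr0 ?subr0;
 rewrite !(rmorphB, rmorphM, rmorphD, rmorph1, fmorphV, rmorph_nat) /=; ring.
Qed.
End Mx.

Local Notation nc := (@Normc.normc _).

Lemma le_sum_term (R : realType) (N : nat) (f : 'I_N -> R) (k : 'I_N) :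
  (forall k, 0 <= f k) -> f k <= \sum_k f k.
Proof. by move=> h; rewrite (bigD1 k) //= lerDl sumr_ge0. Qed.

Theorem mainTheorem11 (R : realType) (l n : nat) (dt : R) :
  (1 <= l)%N -> 0 < dt -> dt * (cfac l n)%:R < 2%:R ->
  forall rho0 : 'M[R[i]]_n.+1,
  exists rhoinf : 'M[R[i]]_n.+1,
    Pl R l n *m rhoinf *m Pl R l n = rhoinf /\
    exists (K q : R), 0 <= K /\ 0 <= q /\ q < 1 /\
      forall (p : nat) (i j : 'I_n.+1),
        `|(iter p (euler1 l dt) rho0 - rhoinf) i j| <= (K * q ^+ p)%:C.
Proof.
move=> l1 dt0 hdt rho0.
set cn := ((cfac l n)%:R : R).
have cn0 : 0 <= cn by rewrite ler0n.
set q0 := Num.max 0 (Num.max (1 - dt / 2) (dt * cn - 1)).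
have q00 : 0 <= q0 by rewrite le_max lexx.
have q01 : q0 < 1.
  by rewrite /q0 !gt_max ltr01 /=; apply/andP; split; lra.
set q := (1 + q0) / 2.
have q0q : q0 < q by rewrite /q; lra.
have q1 : q < 1 by rewrite /q; lra.
have qge0 : 0 <= q by rewrite /q; lra.
pose X p := iter p (euler1 l dt) rho0.
have XS : forall p, X p.+1 = euler1 l dt (X p) by [].
pose Cl (i j : 'I_n.+1) := exists LC : R[i] * R, 0 <= LC.2 /\
   (~~ ((i < l) && (j < l))%N -> LC.1 = 0) /\
   forall p, nc (X p i j - LC.1) <= LC.2 * q ^+ p.
have main : forall m (i j : 'I_n.+1), (2 * n < i + j + m)%N -> Cl i j.
  elim=> [|m IH] i j hij.
    by exfalso; have := ltn_ord i; have := ltn_ord j; lia.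
  pose T p := if (i + l < n.+1)%N && (j + l < n.+1)%N then
     (dt * (Num.sqrt ((cfac l (i + l))%:R : R) * Num.sqrt ((cfac l (j + l))%:R : R)))%:C
       * X p (inord (i + l)) (inord (j + l)) else 0.
  have [D [D0 HD]] : exists D, 0 <= D /\ forall p, nc (T p) <= D * q ^+ p.
    case hc: ((i + l < n.+1) && (j + l < n.+1))%N; rewrite /T hc; last first.
      by exists 0; split => // p; rewrite mul0r /= expr0n addr0 sqrtr0.
    case/andP: hc => hi hj.
    have : Cl (inord (i + l)) (inord (j + l)).
      by apply: IH; rewrite !inordK //; lia.
    case=> -[L' C'] /= [C'0 [HL' HC']].
    have L'0 : L' = 0.
      by apply: HL'; rewrite !inordK //; apply/negP => /andP[]; lia.
    exists (`|dt * (Num.sqrt ((cfac l (i + l))%:R : R) * Num.sqrt ((cfac l (j + l))%:R : R))| * C').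
    split; first by rewrite mulr_ge0.
    move=> p; rewrite Normc.normcM nc_real -mulrA ler_wpM2l //.
    by move: (HC' p); rewrite L'0 subr0.
  have Hrec : forall p, X p.+1 i j =
      (1 - dt * ((cfac l i)%:R + (cfac l j)%:R) / 2)%:C * X p i j + T p.
    by move=> p; rewrite XS euler_entry.
  case hb: ((i < l) && (j < l))%N.
    case/andP: hb => hi hj.
    have Hd : forall p, nc (X p.+1 i j - X p i j) <= D * q ^+ p.
      move=> p; rewrite Hrec !cfac_lt // addr0 mulr0 mul0r subr0 mul1r addrAC subrr add0r.
      exact: HD.
    have [L HL] := @cplx_geom_lim R (fun p => X p i j) D q D0 qge0 q1 Hd.
    exists (L, 2 * (D / (1 - q))) => /=; split; last by split; [rewrite hi hj | exact: HL].
    by rewrite mulr_ge0 // divr_ge0 // subr_ge0 ltW.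
  exists (0, nc (X 0%N i j) + D / (q - q0)) => /=; split.
    by rewrite addr_ge0 ?nc_ge0 // divr_ge0 // subr_ge0 ltW.
  split => // p; rewrite subr0.
  apply: (@trans_decay R (fun p => X p i j)) => // p'.
  rewrite Hrec; apply: (le_trans (le_normcD _ _)); rewrite Normc.normcM nc_real.
  apply: lerD; last exact: HD.
  apply: ler_wpM2r; first exact: nc_ge0.
  have cle : forall k : 'I_n.+1, ((cfac l k)%:R : R) <= cn.
    by move=> k; rewrite ler_nat cfac_mono // -ltnS.
  have cge : forall k : 'I_n.+1, (l <= k)%N -> 1 <= ((cfac l k)%:R : R).
    by move=> k hk; rewrite ler1n cfac_ge.
  have c0 : forall k : 'I_n.+1, 0 <= ((cfac l k)%:R : R) by move=> k; rewrite ler0n.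
  have S1 : 1 <= ((cfac l i)%:R + (cfac l j)%:R : R).
    case: (leqP l i) => hi.
      by have := cge i hi; have := c0 j; lra.
    case: (leqP l j) => hj.
      by have := cge j hj; have := c0 i; lra.
    by move: hb; rewrite hi hj.
  have S2 : ((cfac l i)%:R + (cfac l j)%:R : R) <= 2 * cn.
    by have := cle i; have := cle j; lra.
  move: S1 S2; move: ((cfac l i)%:R + (cfac l j)%:R : R) => S S1 S2.
  have h1 : dt * 1 <= dt * S by rewrite ler_wpM2l // ltW.
  have h2 : dt * S <= dt * (2 * cn) by rewrite ler_wpM2l // ltW.
  have m1 : 1 - dt / 2 <= q0 by rewrite /q0 !le_max lexx !orbT.
  have m2 : dt * cn - 1 <= q0 by rewrite /q0 !le_max lexx !orbT.
  have e : dt * (2 * cn) = 2 * (dt * cn) by ring.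
  rewrite e in h2; rewrite mulr1 in h1.
  rewrite ler_norml; apply/andP; split; lra.
have all : forall i j : 'I_n.+1, Cl i j.
  by move=> i j; apply: (main (2 * n).+1); lia.
move: all; rewrite /Cl => all.
have [F HF] := fin_all_exists (fun i => fin_all_exists (all i)).
exists (\matrix_(i, j) (F i j).1); split.
  have PlE : Pl R l n = diag_mx (\row_k (if (k < l)%N then 1 else 0)).
    apply/matrixP => a b; rewrite !mxE.
    case: (a =P b) => [->|ne] /=; first by case: ifP.
    by rewrite mulr0n.
  apply/matrixP => a b; rewrite PlE mul_diag_mx mul_mx_diag !mxE.
  have [_ [H0 _]] := HF a b.
  case ha: (a < l)%N; case hb: (b < l)%N; rewrite ?mul1r ?mulr1 ?mul0r ?mulr0 //;
    by rewrite H0 // ha hb.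
exists (\sum_i \sum_j (F i j).2), q; split.
  by rewrite !sumr_ge0 // => i _; rewrite sumr_ge0 // => j _; case: (HF i j).
split => //; split => // p i j.
rewrite !mxE.
have -> : forall z : R[i], `|z| = (nc z)%:C by [].
rewrite lecR.
have [C0 [_ HC]] := HF i j.
apply: (le_trans (HC p)); apply: ler_wpM2r; first by rewrite exprn_ge0.
apply: (le_trans (@le_sum_term R _ (fun j => (F i j).2) j _)).
  by move=> k; case: (HF i k).
apply: (@le_sum_term R _ (fun i => \sum_j (F i j).2) i).
by move=> k; rewrite sumr_ge0 // => k' _; case: (HF k k').
Qed.
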